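(* Let $G\leq \mathrm{Aut}(X^* )$, $H\le G$ and $k\ge 0$. If $T:=\{v\in X^k : \psi_v(H)\text{ is finite}\}$ is non-empty, then for every $n\ge k$ the shadow $S(T,n)$ is setwise invariant under the action of $H$ on $X^n$.
   Context: $X^*$ is the free monoid on a finite set $X$, viewed as a rooted tree; $X^n$ is the set of words of length $n$; $\mathrm{Aut}(X^* )$ is the group of prefix-preserving bijections of $X^*$. For $g\in\mathrm{Aut}(X^* )$ and $u\in X^*$ the section $g_u$ is defined by $g(uw)=g(u)g_u(w)$ for all $w$, and $\psi_u(H)=\{h_u:h\in H\}$. For $T\subseteq X^k$ and $n\ge k$, the shadow of $T$ on level $n$ is $S(T,n)=\{v\in X^n: \exists t\in T,\ t \text{ is a prefix of } v\}$. *)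

(* Defs.v *)
From mathcomp Require Import all_boot.
From Stdlib Require List.
Set Implicit Arguments. Unset Strict Implicit. Unset Printing Implicit Defensive.

Definition word (X : finType) := seq X.

Definition is_aut (X : finType) (g : word X -> word X) : Prop :=
  bijective g /\
  (forall u : word X, size (g u) = size u) /\
  (forall u w : word X, exists w' : word X, g (u ++ w) = g u ++ w').

Definition is_subgroup_aut (X : finType) (G : (word X -> word X) -> Prop) : Prop :=
  (forall g, G g -> is_aut g) /\
  G id /\
  (forall g h, G g -> G h -> G (g \o h)) /\
  (forall g, G g -> exists g', G g' /\ cancel g g' /\ cancel g' g).

(* Section g_u: g (u ++ w) = g u ++ g_u w. *)
Definition section (X : finType) (g : word X -> word X) (u : word X) : word X -> word X :=
  fun w => drop (size u) (g (u ++ w)).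

Definition psi_finite (X : finType) (H : (word X -> word X) -> Prop) (u : word X) : Prop :=
  exists l : list (word X -> word X), forall h, H h -> List.In (section h u) l.

Definition shadow (X : finType) (T : word X -> Prop) (n : nat) : word X -> Prop :=
  fun v => size v = n /\ exists t, T t /\ exists w, v = t ++ w.

(* Main.v *)
Require Import Defs.
From mathcomp Require Import all_boot.
From Stdlib Require Import FunctionalExtensionality.
From Stdlib Require List.

Lemma aut_decomp (X : finType) (g : word X -> word X) u w :
  is_aut g -> g (u ++ w) = g u ++ section g u w.
Proof.
move=> [_ [Hs Hp]]; rewrite /section.
have [w' ->] := Hp u w.
by rewrite -(Hs u) drop_size_cat.
Qed.

Lemma psi_move (X : finType) (H : (word X -> word X) -> Prop) h t :
  is_subgroup_aut H -> H h -> psi_finite H t -> psi_finite H (h t).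
Proof.
move=> [Ha [_ [Hc Hi]]] Hh [l Hl].
have [h' [Hh' [c1 c2]]] := Hi h Hh.
exists (map (fun f => f \o section h' (h t)) l) => g Hg.
have E : section g (h t) = section (g \o h) t \o section h' (h t).
  apply: functional_extensionality => w /=.
  have e1 : h' (h t ++ w) = t ++ section h' (h t) w.
    by rewrite (@aut_decomp _ _ (h t) w (Ha _ Hh')) c1.
  rewrite /section -e1 /= c2.
  have [_ [Hs _]] := Ha _ Hh.
  by rewrite Hs.
rewrite E; apply: (List.in_map (fun f => f \o section h' (h t))); apply: Hl; exact: Hc.
Qed.

Theorem lemma4p2 (X : finType) (G H : (word X -> word X) -> Prop) (k : nat) :
  is_subgroup_aut G ->
  is_subgroup_aut H ->
  (forall h, H h -> G h) ->
  let T := fun v : word X => size v = k /\ psi_finite H v in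
  (exists v, T v) ->
  forall n, k <= n ->
  forall h, H h ->
  forall w : word X, (exists v, shadow T n v /\ h v = w) <-> shadow T n w.
Proof.
move=> _ HH _ T _ n _.
have fwd : forall h v, H h -> shadow T n v -> shadow T n (h v).
  move=> h v Hh [Sv [t [[St Pt] [w' Ev]]]].
  have [Ha _] := HH; have Hah := Ha _ Hh.
  have [_ [Hs _]] := Hah.
  split; first by rewrite Hs.
  exists (h t); split; first by split; [rewrite Hs | exact: psi_move].
  by exists (section h t w'); rewrite Ev (@aut_decomp _ _ t w' Hah).
move=> h Hh w; split.
  by move=> [v [Sv <-]]; exact: fwd.
move=> Sw.
have [_ [_ [_ Hi]]] := HH.
have [h' [Hh' [c1 c2]]] := Hi h Hh.
exists (h' w); split; [exact: fwd | exact: c2].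
Qed.
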